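(* Let $\delta\in[0,1/2)\cup(1/2,1]$, $J\in\mathbb{R}$, and consider the dynamical system on $\mathbb{R}^3$ (coordinates indexed by $i\in\{A,B,C\}$) $$\dot{x}_i=(1-x_i)\,e^{2[-\delta Jx_{a(i)}-(1-\delta)Jx_{h(i)}+J/2]}-x_i\,e^{-2[-\delta Jx_{a(i)}-(1-\delta)Jx_{h(i)}+J/2]},\qquad i\in\{A,B,C\}.$$ The point $(1/2,1/2,1/2)^T$ is a fixed point for all $J$, and: (a) for $J<0$, there is a bifurcation at $J_c=-1$: the fixed point $(1/2,1/2,1/2)^T$ loses stability and two stable fixed points appear for $J<J_c$; (b) for $J>0$, there is a Hopf (Andronov–Hopf) bifurcation at $J_c=2$.
   Context: The three indices $A,B,C$ are arranged cyclically; $h(i)$ denotes the neighbour of $i$ in the clockwise direction and $a(i)$ the neighbour in the anticlockwise direction (e.g. $h(A)=B,h(B)=C,h(C)=A$, and $a=h^{-1}$). $J$ is the bifurcation parameter. *)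

(* Defs.v *)
From Stdlib Require Import Reals.
From Coquelicot Require Import Coquelicot.
Open Scope R_scope.

Inductive idx := IA | IB | IC.

Definition h (i : idx) : idx := match i with IA => IB | IB => IC | IC => IA end.
Definition a (i : idx) : idx := match i with IA => IC | IB => IA | IC => IB end.

Definition idx_eqb (i j : idx) : bool :=
  match i, j with IA, IA | IB, IB | IC, IC => true | _, _ => false end.

Definition state := idx -> R.

Definition expo (delta J : R) (x : state) (i : idx) : R :=
  - delta * J * x (a i) - (1 - delta) * J * x (h i) + J / 2.

Definition vf (delta J : R) (x : state) : state := fun i =>
  (1 - x i) * exp (2 * expo delta J x i) - x i * exp (- (2 * expo delta J x i)).

Definition is_fixed_point (F : state -> state) (x : state) : Prop :=
  forall i, F x i = 0.

Definition upd (x : state) (j : idx) (t : R) : state :=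
  fun k => if idx_eqb k j then t else x k.

Definition jac (F : state -> state) (x : state) : idx -> idx -> R :=
  fun i j => Derive (fun t => F (upd x j t) i) (x j).

Definition det3 (N : idx -> idx -> C) : C :=
  (N IA IA * (N IB IB * N IC IC - N IB IC * N IC IB)
   - N IA IB * (N IB IA * N IC IC - N IB IC * N IC IA)
   + N IA IC * (N IB IA * N IC IB - N IB IB * N IC IA))%C.

Definition charpoly (M : idx -> idx -> R) (lam : C) : C :=
  det3 (fun i j => ((if idx_eqb i j then lam else RtoC 0) - RtoC (M i j))%C).

Definition is_eigenvalue (M : idx -> idx -> R) (lam : C) : Prop :=
  charpoly M lam = RtoC 0.

Definition lin_stable (F : state -> state) (x : state) : Prop :=
  is_fixed_point F x /\
  forall lam, is_eigenvalue (jac F x) lam -> Re lam < 0.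

Definition lin_unstable (F : state -> state) (x : state) : Prop :=
  is_fixed_point F x /\
  exists lam, is_eigenvalue (jac F x) lam /\ 0 < Re lam.

Definition hopf_bifurcation (F : R -> state -> state) (x0 : R -> state)
  (Jc : R) : Prop :=
  (forall J, is_fixed_point (F J) (x0 J)) /\
  exists w : R, w <> 0 /\
    is_eigenvalue (jac (F Jc) (x0 Jc)) (0, w) /\
    is_eigenvalue (jac (F Jc) (x0 Jc)) (0, - w) /\
    (forall mu, is_eigenvalue (jac (F Jc) (x0 Jc)) mu -> Re mu = 0 ->
       mu = (0, w) \/ mu = (0, - w)) /\
    exists eps : R, 0 < eps /\
    exists lam : R -> C,
      lam Jc = (0, w) /\
      (forall J, Rabs (J - Jc) < eps -> is_eigenvalue (jac (F J) (x0 J)) (lam J)) /\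
      ex_derive (fun J => Re (lam J)) Jc /\
      Derive (fun J => Re (lam J)) Jc <> 0.

Definition center : state := fun _ => 1 / 2.

(* Main.v *)
Require Import Defs.
From Stdlib Require Import Reals Lra Nsatz FunctionalExtensionality.
From Coquelicot Require Import Coquelicot.
Open Scope R_scope.

Definition circ (d p r : R) : idx -> idx -> R := fun i j =>
  match i, j with
  | IA, IA | IB, IB | IC, IC => d
  | IA, IC | IB, IA | IC, IB => p
  | _, _ => r end.

Lemma charpoly_circ d p r (l : C) :
  charpoly (circ d p r) l =
  ((l - RtoC (d+p+r)) * ((l - RtoC (d - (p+r)/2)) * (l - RtoC (d - (p+r)/2))
     + RtoC (3*(r-p)^2/4)))%C.
Proof.
  destruct l as [x y]. unfold charpoly, det3, circ; simpl.
  unfold Cminus, Cmult, Cplus, Copp, RtoC; simpl.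
  apply injective_projections; simpl; field.
Qed.

Lemma Cmult_0 (z w : C) : (z * w)%C = RtoC 0 -> z = RtoC 0 \/ w = RtoC 0.
Proof.
  destruct z as [a b], w as [c e]. unfold Cmult, RtoC; simpl. intro H.
  injection H as H1 H2.
  destruct (Req_dec (a*a+b*b) 0) as [H0|H0].
  - left. assert (a = 0) by nra. assert (b = 0) by nra. subst; reflexivity.
  - right. assert (H3 : c*(a*a+b*b) = 0).
    { replace (c*(a*a+b*b)) with (a*(a*c-b*e) + b*(a*e+b*c)) by ring. rewrite H1, H2; ring. }
    assert (H4 : e*(a*a+b*b) = 0).
    { replace (e*(a*a+b*b)) with (a*(a*e+b*c) - b*(a*c-b*e)) by ring. rewrite H1, H2; ring. }
    assert (c = 0). { apply Rmult_integral in H3. destruct H3; [auto|contradiction]. }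
    assert (e = 0). { apply Rmult_integral in H4. destruct H4; [auto|contradiction]. }
    subst; reflexivity.
Qed.

Lemma eig_circ d p r l : is_eigenvalue (circ d p r) l ->
  l = RtoC (d+p+r) \/ (Re l = d - (p+r)/2 /\ (Im l)^2 = 3*(r-p)^2/4).
Proof.
  unfold is_eigenvalue. rewrite charpoly_circ. intro H.
  apply Cmult_0 in H. destruct H as [H|H].
  - left. destruct l as [x y]. unfold Cminus, Cplus, Copp, RtoC in H; simpl in H.
    injection H as H1 H2. apply injective_projections; simpl; lra.
  - right. destruct l as [x y].
    assert (HB : 0 <= 3*(r-p)^2/4) by (pose proof (pow2_ge_0 (r-p)); lra).
    generalize dependent (3*(r-p)^2/4). generalize (d - (p+r)/2). intros al B H HB.
    unfold Cminus, Cmult, Cplus, Copp, RtoC in H; cbn [fst snd] in H.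
    injection H as H1 H2. cbn [Re Im fst snd].
    destruct (Req_dec y 0).
    + subst y. assert (x = al) by nra. split; [auto|]. subst. nra.
    + assert (x = al) by nra. split; [auto|]. subst. nra.
Qed.

Lemma eig_circ_e0 d p r : is_eigenvalue (circ d p r) (RtoC (d+p+r)).
Proof.
  unfold is_eigenvalue. rewrite charpoly_circ.
  unfold Cminus, Cmult, Cplus, Copp, RtoC; simpl. apply injective_projections; simpl; ring.
Qed.

Lemma eig_circ_cplx d p r y : y^2 = 3*(r-p)^2/4 ->
  is_eigenvalue (circ d p r) (d - (p+r)/2, y).
Proof.
  intro Hy. unfold is_eigenvalue. rewrite charpoly_circ.
  generalize dependent (3*(r-p)^2/4). intros B Hy.
  unfold Cminus, Cmult, Cplus, Copp, RtoC; cbn [fst snd].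
  apply injective_projections; cbn [fst snd]; rewrite <- Hy; ring.
Qed.
Definition Ec delta J c := - delta * J * c - (1 - delta) * J * c + J / 2.
Definition dd delta J c := - (exp (2 * Ec delta J c) + exp (- (2 * Ec delta J c))).
Definition GG delta J c := (1 - c) * exp (2 * Ec delta J c) + c * exp (- (2 * Ec delta J c)).

Lemma jac_cst delta J c : jac (vf delta J) (fun _ => c) =
  circ (dd delta J c) (-2*delta*J*GG delta J c) (-2*(1-delta)*J*GG delta J c).
Proof.
  apply functional_extensionality; intro i; apply functional_extensionality; intro j.
  unfold jac, dd, GG, Ec.
  destruct i, j; cbn [circ]; apply is_derive_unique;
  unfold vf, expo, upd; cbn [idx_eqb a h]; auto_derive; auto;
  try replace (- delta * J * c + - ((1 - delta) * J * c) + J / 2)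
     with (- delta * J * c - (1 - delta) * J * c + J / 2) by ring; ring.
Qed.

Lemma pos_from_deriv (f f' : R -> R) : f 0 = 0 ->
  (forall c, is_derive f c (f' c)) -> (forall c, 0 < c -> 0 < f' c) ->
  forall v, 0 < v -> 0 < f v.
Proof.
  intros H0 Hd Hp v Hv.
  destruct (MVT_cor2 f f' 0 v Hv) as [c [Hc Hc2]].
  { intros c _. apply is_derive_Reals. apply Hd. }
  rewrite H0 in Hc. assert (0 < f' c * (v - 0)).
  { apply Rmult_lt_0_compat; [apply Hp; lra| lra]. }
  lra.
Qed.

Lemma exp_gt_expm (v : R) : 0 < v -> exp (-v) < exp v.
Proof. intro; apply exp_increasing; lra. Qed.

Lemma tanh_lt v : 0 < v -> exp v - exp (-v) < v * (exp v + exp (-v)).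
Proof.
  intro Hv.
  assert (H := pos_from_deriv (fun v => v * (exp v + exp (-v)) - (exp v - exp (-v)))
     (fun v => v * (exp v - exp (-v)))).
  apply Rminus_gt_0_lt. apply H; auto.
  - rewrite Ropp_0, exp_0; ring.
  - intro c. auto_derive; auto. ring.
  - intros c Hc. apply Rmult_lt_0_compat; auto. pose proof (exp_gt_expm c Hc); lra.
Qed.

Lemma sinh_gt z : 0 < z -> 2 * z < exp z - exp (-z).
Proof.
  intro Hz.
  assert (H := pos_from_deriv (fun z => exp z - exp (-z) - 2 * z)
     (fun z => exp z + exp (-z) - 2)).
  apply Rminus_gt_0_lt. apply H; auto.
  - rewrite Ropp_0, exp_0; ring.
  - intro c. auto_derive; auto. ring.
  - intros c Hc. rewrite exp_Ropp.
    assert (1 < exp c) by (rewrite <- exp_0; apply exp_increasing; lra).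
    assert (0 < exp c) by apply exp_pos.
    assert (exp c + / exp c - 2 = (exp c - 1)^2 / exp c) by (field; lra).
    rewrite H2. apply Rdiv_lt_0_compat; nra.
Qed.

Lemma fp_local xi E : (1 - xi) * exp (2 * E) - xi * exp (- (2 * E)) = 0 ->
  xi - 1/2 = 0 \/ Rabs (xi - 1/2) < Rabs E.
Proof.
  intro H.
  set (u := exp (2*E)) in *. set (v := exp (-(2*E))) in *.
  assert (Hu : 0 < u) by apply exp_pos. assert (Hv : 0 < v) by apply exp_pos.
  assert (Hx : xi - 1/2 = (u - v) / (2 * (u + v))).
  { assert (H1 : xi * (u + v) = u).
    { replace (xi * (u+v)) with (u - ((1 - xi) * u - xi * v)) by ring. rewrite H; ring. }
    apply Rmult_eq_reg_r with (2*(u+v)); [|lra].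
    replace ((u - v) / (2 * (u + v)) * (2 * (u + v))) with (u - v) by (field; lra).
    replace ((xi - 1/2) * (2 * (u + v))) with (2 * (xi * (u+v)) - (u+v)) by field.
    rewrite H1; ring. }
  destruct (Rtotal_order E 0) as [HE|[HE|HE]].
  - right. pose proof (tanh_lt (-(2*E))) as T. rewrite Ropp_involutive in T.
    fold u v in T. specialize (T ltac:(lra)).
    assert (v > u) by (apply exp_increasing; lra).
    rewrite Hx, Rabs_left, Rabs_left; try lra.
    + apply Rmult_lt_reg_r with (2*(u+v)); [lra|]. field_simplify; lra.
    + apply Rdiv_neg_pos; lra.
  - left. subst. unfold u, v in Hx. rewrite Rmult_0_r, Ropp_0, exp_0 in Hx. lra.
  - right. pose proof (tanh_lt (2*E) ltac:(lra)) as T. fold u v in T.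
    assert (u > v) by (apply exp_increasing; lra).
    rewrite Hx, Rabs_right, Rabs_right; try lra.
    + apply Rmult_lt_reg_r with (2*(u+v)); [lra|]. field_simplify; lra.
    + apply Rle_ge, Rlt_le, Rdiv_lt_0_compat; lra.
Qed.

Lemma stab_circ F x d p r : is_fixed_point F x -> jac F x = circ d p r ->
  d+p+r < 0 -> d-(p+r)/2 < 0 -> lin_stable F x.
Proof.
  intros Hf Hj H1 H2. split; auto. intros l Hl. rewrite Hj in Hl.
  apply eig_circ in Hl. destruct Hl as [Hl|[Hl _]]; [subst; simpl; lra | lra].
Qed.

Lemma Ec_half delta J : Ec delta J (1/2) = 0.
Proof. unfold Ec; field. Qed.

Lemma jac_center delta J : jac (vf delta J) center = circ (-2) (-2*delta*J) (-2*(1-delta)*J).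
Proof.
  unfold center. rewrite jac_cst. unfold dd, GG. rewrite Ec_half, Rmult_0_r, Ropp_0, exp_0.
  f_equal; field.
Qed.

Lemma fp_center delta J : is_fixed_point (vf delta J) center.
Proof.
  intro i. unfold vf, center. fold (Ec delta J (1/2)).
  change (expo delta J (fun _ => 1/2) i) with (Ec delta J (1/2)).
  rewrite Ec_half, Rmult_0_r, Ropp_0, exp_0. field.
Qed.

Lemma vf_cst delta J c i : vf delta J (fun _ => c) i =
  (1 - c) * exp (2 * Ec delta J c) - c * exp (- (2 * Ec delta J c)).
Proof. reflexivity. Qed.

Lemma stable_cst delta J c : 0 < c < 1 -> J < 0 ->
  (1 - c) * exp (2 * Ec delta J c) - c * exp (- (2 * Ec delta J c)) = 0 ->
  0 < 1 + 4 * J * c * (1 - c) -> lin_stable (vf delta J) (fun _ => c).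
Proof.
  intros Hc HJ Hf Hs.
  apply stab_circ with (dd delta J c) (-2*delta*J*GG delta J c) (-2*(1-delta)*J*GG delta J c).
  - intro i. rewrite vf_cst. exact Hf.
  - apply jac_cst.
  - unfold dd, GG. set (u := exp (2*Ec delta J c)) in *. set (v := exp (-(2*Ec delta J c))) in *.
    assert (Hu : 0 < u) by apply exp_pos. assert (Hv : 0 < v) by apply exp_pos.
    assert (HG : (1 - c) * u + c * v = 2 * c * (1 - c) * (u + v)).
    { replace (2 * c * (1 - c) * (u + v)) with
        ((1-c)*u + c*v + (c - (1-c)) * ((1 - c) * u - c * v)) by ring. rewrite Hf; ring. }
    rewrite HG.
    replace (- (u + v) + -2 * delta * J * (2 * c * (1 - c) * (u + v)) +
      -2 * (1 - delta) * J * (2 * c * (1 - c) * (u + v)))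
      with (- ((u+v) * (1 + 4 * J * c * (1 - c)))) by ring.
    assert (0 < (u+v) * (1 + 4 * J * c * (1 - c))) by (apply Rmult_lt_0_compat; lra). lra.
  - unfold dd, GG. set (u := exp (2*Ec delta J c)) in *. set (v := exp (-(2*Ec delta J c))) in *.
    assert (Hu : 0 < u) by apply exp_pos. assert (Hv : 0 < v) by apply exp_pos.
    assert (0 < (1 - c) * u + c * v) by nra.
    replace (- (u + v) - (-2 * delta * J * ((1 - c) * u + c * v) +
       -2 * (1 - delta) * J * ((1 - c) * u + c * v)) / 2)
      with (- (u + v) + J * ((1 - c) * u + c * v)) by field. nra.
Qed.

Lemma Ec_eq delta J c : Ec delta J c = J * (1/2 - c).
Proof. unfold Ec; field. Qed.

Lemma exp_sq E : exp (2*E) * exp (2*E) = exp (4*E).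
Proof. rewrite <- exp_plus; f_equal; ring. Qed.

Lemma exp_inv E : exp (-(2*E)) = / exp (2*E).
Proof. apply exp_Ropp. Qed.

Lemma exists_fp delta J : J < -1 -> exists c, 1/2 < c < 1 /\
  (1 - c) * exp (2 * Ec delta J c) - c * exp (- (2 * Ec delta J c)) = 0 /\
  0 < 1 + 4 * J * c * (1 - c).
Proof.
  intro HJ. set (K := -J).
  set (psi := fun c => (1 - c) * exp (2 * Ec delta J c) - c * exp (- (2 * Ec delta J c))).
  set (c0 := 1/2 + (K-1)/(4*K)).
  assert (HK : 1 < K) by (unfold K; lra).
  assert (Hc0 : 1/2 < c0 < 1).
  { unfold c0. split.
    - assert (0 < (K-1)/(4*K)) by (apply Rdiv_lt_0_compat; lra). lra.
    - assert ((K-1)/(4*K) < 1/2). { apply Rmult_lt_reg_r with (4*K); [lra|].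
        field_simplify; lra. } lra. }
  assert (Hpsi0 : 0 < psi c0).
  { unfold psi. rewrite exp_inv.
    set (u := exp (2 * Ec delta J c0)).
    assert (Hu : 0 < u) by apply exp_pos.
    assert (HE : 4 * Ec delta J c0 = K - 1).
    { rewrite Ec_eq. unfold c0, K. field. unfold K in HK; lra. }
    assert (Hu2 : K < u * u).
    { unfold u. rewrite exp_sq, HE. pose proof (exp_ineq1 (K-1) ltac:(lra)). lra. }
    assert (Hm : 0 < ((1 - c0) * u - c0 * / u) * u).
    { replace (((1 - c0) * u - c0 * / u) * u) with ((1-c0)*(u*u) - c0) by (field; lra).
      assert ((1-c0)*K - c0 > 0).
      { unfold c0. apply Rmult_lt_reg_r with (4*K); [lra|]. field_simplify; [|lra]. nra. }
      assert ((1-c0)*K < (1-c0)*(u*u)) by (apply Rmult_lt_compat_l; lra). lra. }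
    destruct (Rlt_or_le 0 ((1 - c0) * u - c0 * / u)) as [?|Hle]; auto.
    exfalso. assert (((1 - c0) * u - c0 * / u) * u <= 0) by nra. lra. }
  assert (Hpsi1 : psi 1 < 0).
  { unfold psi. pose proof (exp_pos (- (2 * Ec delta J 1))). lra. }
  assert (Hcont : continuity (fun c => - psi c)).
  { intro x. apply continuity_pt_filterlim.
    apply (ex_derive_continuous (fun c => - psi c)). unfold psi, Ec. auto_derive; auto. }
  destruct (IVT (fun c => - psi c) c0 1 Hcont ltac:(lra) ltac:(lra) ltac:(lra))
    as [c [[Hc1 Hc2] Hc3]].
  assert (Hpc : psi c = 0) by lra.
  assert (Hc2' : c < 1). { destruct Hc2 as [?|Heq]; auto. subst c. lra. }
  exists c. split; [lra|]. split; [exact Hpc|].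
  unfold psi in Hpc. rewrite exp_inv in Hpc.
  set (u := exp (2 * Ec delta J c)) in *.
  assert (Hu : 0 < u) by apply exp_pos.
  set (y := c - 1/2).
  assert (Hy : 0 < y) by (unfold y; lra).
  set (z := 4 * Ec delta J c).
  assert (Hz : z = 4 * K * y) by (unfold z, K, y; rewrite Ec_eq; ring).
  assert (Hzp : 0 < z) by (rewrite Hz; nra).
  set (s := u * u).
  assert (Hs : s = exp z) by (unfold s, u, z; apply exp_sq).
  assert (Hs1 : 1 < s) by (rewrite Hs, <- exp_0; apply exp_increasing; lra).
  assert (Hrel : (1 - c) * s = c).
  { unfold s. replace ((1 - c) * (u * u)) with (((1 - c) * u - c * / u) * u + c) by (field; lra).
    rewrite Hpc; ring. }
  assert (Hsinh : 2 * z * s < s * s - 1).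
  { pose proof (sinh_gt z Hzp) as Hh. rewrite exp_Ropp, <- Hs in Hh.
    assert (2 * z < s - / s) by exact Hh.
    replace (s * s - 1) with ((s - /s) * s) by (field; lra). nra. }
  assert (H1 : (1 - c) * (1 + s) = 1) by nra.
  assert (H2 : z * c * (1 - c) * ((1 + s) * (1 + s)) = z * s).
  { replace (z * c * (1 - c) * ((1 + s) * (1 + s))) with (z * (c * (1+s)) * ((1 - c) * (1 + s))) by ring.
    rewrite H1. replace (c * (1 + s)) with (c + c * s) by ring.
    replace c with ((1 - c) * s) at 1 by exact Hrel. nra. }
  assert (H3 : y * ((1 + s) * (1 + s)) = (s * s - 1) / 2).
  { unfold y. replace ((c - 1/2) * ((1 + s) * (1 + s))) with
       ((c*(1+s)) * (1+s) - (1+s)*(1+s)/2) by field.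
    assert (c * (1 + s) = s) by nra. rewrite H. field. }
  assert (z * c * (1 - c) < y).
  { apply Rmult_lt_reg_r with ((1 + s) * (1 + s)); [nra|]. rewrite H2, H3. lra. }
  rewrite Hz in H. unfold K in H.
  assert (-J * c * (1-c) * (4 * y) < 1 * y) by nra.
  assert (-J * c * (1-c) * 4 < 1) by (apply Rmult_lt_reg_r with y; nra).
  nra.
Qed.

Lemma abs_bound p q m d K : Rabs p <= m -> Rabs q <= m -> 0 <= d <= 1 -> 0 < K <= 1 ->
  Rabs (K * (d * p + (1 - d) * q)) <= m.
Proof.
  intros Hp Hq Hd HK.
  assert (-m <= p <= m) by (revert Hp; unfold Rabs; destruct Rcase_abs; lra).
  assert (-m <= q <= m) by (revert Hq; unfold Rabs; destruct Rcase_abs; lra).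
  assert (0 <= m) by (pose proof (Rabs_pos p); lra).
  assert (-m <= d * p + (1 - d) * q <= m) by nra.
  unfold Rabs; destruct Rcase_abs; nra.
Qed.

Lemma uniq_fp delta J x : 0 <= delta <= 1 -> -1 <= J < 0 ->
  is_fixed_point (vf delta J) x -> forall i, x i = 1/2.
Proof.
  intros Hd HJ Hf.
  set (m := Rmax (Rabs (x IA - 1/2)) (Rmax (Rabs (x IB - 1/2)) (Rabs (x IC - 1/2)))).
  assert (Hle : forall i, Rabs (x i - 1/2) <= m).
  { intro i; unfold m; destruct i.
    - apply Rmax_l.
    - eapply Rle_trans; [apply Rmax_l|apply Rmax_r].
    - eapply Rle_trans; [apply Rmax_r|apply Rmax_r]. }
  assert (Hi : forall i, x i - 1/2 = 0 \/ Rabs (x i - 1/2) < m).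
  { intro i. destruct (fp_local (x i) (expo delta J x i) (Hf i)) as [H|H]; [left; auto|right].
    eapply Rlt_le_trans; [exact H|].
    replace (expo delta J x i) with
      ((-J) * (delta * (x (a i) - 1/2) + (1 - delta) * (x (h i) - 1/2)))
      by (unfold expo; field).
    apply abs_bound; auto; lra. }
  assert (Hm : exists j, Rabs (x j - 1/2) = m).
  { unfold m, Rmax. destruct (Rle_dec (Rabs (x IB - 1/2)) (Rabs (x IC - 1/2)));
    destruct Rle_dec; eauto. }
  destruct Hm as [j Hj].
  assert (Hm0 : m = 0).
  { destruct (Hi j) as [H|H].
    - rewrite H, Rabs_R0 in Hj. auto.
    - lra. }
  intro i. specialize (Hle i). rewrite Hm0 in Hle.
  pose proof (Rabs_pos (x i - 1/2)).
  assert (Rabs (x i - 1/2) = 0) by lra.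
  apply Rabs_eq_0 in H0. lra.
Qed.

Lemma x2_fp delta J c :
  (1 - c) * exp (2 * Ec delta J c) - c * exp (- (2 * Ec delta J c)) = 0 ->
  (1 - (1 - c)) * exp (2 * Ec delta J (1 - c)) - (1 - c) * exp (- (2 * Ec delta J (1 - c))) = 0.
Proof.
  intro H. replace (Ec delta J (1 - c)) with (- Ec delta J c) by (rewrite !Ec_eq; field).
  replace (2 * - Ec delta J c) with (- (2 * Ec delta J c)) by ring.
  rewrite Ropp_involutive. lra.
Qed.

Theorem proposition1 (delta : R)
  (Hdelta : (0 <= delta < 1 / 2) \/ (1 / 2 < delta <= 1)) :
  (forall J : R, is_fixed_point (vf delta J) center) /\
  ((forall J : R, -1 < J < 0 -> lin_stable (vf delta J) center) /\
   (forall J : R, -1 <= J < 0 ->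
      forall x : state, is_fixed_point (vf delta J) x -> forall i, x i = 1 / 2) /\
   (forall J : R, J < -1 ->
      lin_unstable (vf delta J) center /\
      exists x1 x2 : state,
        x1 <> x2 /\ x1 <> center /\ x2 <> center /\
        lin_stable (vf delta J) x1 /\ lin_stable (vf delta J) x2)) /\
  ((forall J : R, 0 < J < 2 -> lin_stable (vf delta J) center) /\
   (forall J : R, 2 < J -> lin_unstable (vf delta J) center) /\
   hopf_bifurcation (fun J => vf delta J) (fun _ => center) 2).
Proof.
  assert (Hd : 0 <= delta <= 1) by lra.
  assert (Hd2 : 1 - 2 * delta <> 0) by lra.
  split; [exact (fp_center delta)|].
  split; [split; [|split]|split; [|split]].
  - intros J HJ. eapply stab_circ; [apply fp_center|apply jac_center|lra|lra].
  - intros J HJ x Hx. apply (uniq_fp delta J x Hd HJ Hx).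
  - intros J HJ. split.
    + split; [apply fp_center|]. eexists. split.
      * rewrite jac_center. apply eig_circ_e0.
      * simpl. lra.
    + destruct (exists_fp delta J HJ) as [c [Hc [Hf Hs]]].
      exists (fun _ => c), (fun _ => 1 - c).
      split; [|split; [|split; [|split]]].
      * intro E. assert (c = 1 - c) by exact (f_equal (fun f => f IA) E). lra.
      * intro E. assert (c = 1/2) by exact (f_equal (fun f => f IA) E). lra.
      * intro E. assert (1 - c = 1/2) by exact (f_equal (fun f => f IA) E). lra.
      * apply stable_cst; auto; lra.
      * apply stable_cst; try lra. apply x2_fp; auto.
  - intros J HJ. eapply stab_circ; [apply fp_center|apply jac_center|lra|lra].
  - intros J HJ. split; [apply fp_center|].
    set (B := 3 * ((-2 * (1 - delta) * J) - (-2 * delta * J)) ^ 2 / 4).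
    assert (HB : 0 <= B) by (unfold B; pose proof (pow2_ge_0 ((-2 * (1 - delta) * J) - (-2 * delta * J))); lra).
    exists (-2 - (-2 * delta * J + -2 * (1 - delta) * J) / 2, sqrt B). split.
    + rewrite jac_center. apply eig_circ_cplx. apply pow2_sqrt; auto.
    + simpl. lra.
  - set (lam := fun J : R => (J - 2, sqrt (3 * ((-2 * (1 - delta) * J) - (-2 * delta * J)) ^ 2 / 4))).
    assert (Hlam : forall J, is_eigenvalue (jac (vf delta J) center) (lam J)).
    { intro J. rewrite jac_center. unfold lam.
      replace (J - 2) with (-2 - (-2 * delta * J + -2 * (1 - delta) * J) / 2) by field.
      apply eig_circ_cplx. apply pow2_sqrt.
      pose proof (pow2_ge_0 ((-2 * (1 - delta) * J) - (-2 * delta * J))); lra. }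
    set (w := snd (lam 2)).
    assert (Hw2 : w ^ 2 = 3 * ((-2 * (1 - delta) * 2) - (-2 * delta * 2)) ^ 2 / 4).
    { unfold w, lam; simpl snd. apply pow2_sqrt.
      pose proof (pow2_ge_0 ((-2 * (1 - delta) * 2) - (-2 * delta * 2))); lra. }
    assert (Hw : w <> 0).
    { intro E. rewrite E in Hw2.
      assert ((-2 * (1 - delta) * 2) - (-2 * delta * 2) = 4 * (2 * delta - 1)) by ring.
      rewrite H in Hw2. assert (0 < (4 * (2 * delta - 1))^2).
      { apply pow_lt. nra. }
      lra. }
    split; [intro J; apply fp_center|].
    exists w. cbv beta. split; [exact Hw|].
    assert (Hl2 : lam 2 = (0, w)).
    { unfold w. unfold lam at 1. simpl fst. f_equal. ring. }
    split; [rewrite <- Hl2; apply Hlam|].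
    split.
    { rewrite jac_center.
      replace (0 : R) with (-2 - (-2 * delta * 2 + -2 * (1 - delta) * 2) / 2) by field.
      apply eig_circ_cplx. rewrite <- Hw2. ring. }
    split.
    { intros mu Hmu Hre. rewrite jac_center in Hmu. apply eig_circ in Hmu.
      destruct Hmu as [Hmu|[_ Him]].
      - rewrite Hmu in Hre. simpl in Hre. lra.
      - destruct mu as [mx my]. cbn [Re Im fst snd] in Hre, Him. subst mx.
        rewrite <- Hw2 in Him.
        assert ((my - w) * (my + w) = 0) by nra.
        apply Rmult_integral in H. destruct H; [left|right]; f_equal; lra. }
    exists 1. split; [lra|]. exists lam. split; [exact Hl2|].
    split; [intros J _; apply Hlam|].
    assert (Hder : is_derive (fun J => Re (lam J)) 2 1).
    { unfold lam; simpl. auto_derive; auto. }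
    split; [eexists; exact Hder|].
    assert (HD : Derive (fun J => Re (lam J)) 2 = 1) by (apply is_derive_unique; exact Hder).
    rewrite HD. lra.
Qed.
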